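(* Let $p\colon X\to B$ be a Boolean set. If $G$ is a proper filter in $(X,\le)$ then $p(G)$ is a proper filter in $B$.
   Context: Convention: a ''Boolean algebra'' means a generalized Boolean algebra (relatively complemented distributive lattice with $0$). Presheaf of sets over a meet semilattice $E$: pairwise disjoint sets $X_e$, restriction maps $x\mapsto x|^e_f$ for $e\ge f$ with $|^e_e=\mathrm{id}$ and $(x|^e_f)|^f_g=x|^e_g$; $p(x)=e$ iff $x\in X_e$; global support: all $X_e\neq\emptyset$. Order: $x\le y$ iff $p(x)\le p(y)$ and $x=y|^{p(y)}_{p(x)}$. Compatibility $x\sim y$: $x\wedge y$ exists and $p(x\wedge y)=p(x)\wedge p(y)$. A Boolean set is a presheaf $p\colon X\to B$ with global support over a Boolean algebra $B$ such that $(X,\le)$ has least element $0$, compatible pairs have joins, and $p(x)=0\Rightarrow x=0$. In a poset, a filter is a non-empty subset $F$ that is down directed ($a,b\in F$ implies some $c\in F$ with $c\le a,b$) and upwardly closed; it is proper if it is not the whole poset. *)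

(* Defs.v *)
From HB Require Import structures.
From mathcomp Require Import all_boot all_order.
Set Implicit Arguments. Unset Strict Implicit. Unset Printing Implicit Defensive.
Import Order.TTheory.
Local Open Scope order_scope.

(* "Boolean algebra" = generalized Boolean algebra = relatively complemented
   distributive lattice with 0 : MathComp's cbDistrLatticeType. *)

Section BooleanSets.
Context {d : Order.disp_t} {B : cbDistrLatticeType d} {X : Type}.
Variables (p : X -> B) (res : X -> B -> X).
(* res x f = x|^{p x}_f, meaningful only when f <= p x. *)

Definition is_presheaf : Prop :=
  (forall x f, f <= p x -> p (res x f) = f) /\
  (forall x, res x (p x) = x) /\
  (forall x f g, g <= f -> f <= p x -> res (res x f) g = res x g).

Definition global_support : Prop := forall e : B, exists x, p x = e.

Definition xle (x y : X) : Prop := p x <= p y /\ x = res y (p x).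

Definition is_glb (x y m : X) : Prop :=
  xle m x /\ xle m y /\ (forall z, xle z x -> xle z y -> xle z m).
Definition is_lub (x y j : X) : Prop :=
  xle x j /\ xle y j /\ (forall z, xle x z -> xle y z -> xle j z).

Definition compatible (x y : X) : Prop :=
  exists m, is_glb x y m /\ p m = p x `&` p y.

Definition boolean_set : Prop :=
  is_presheaf /\ global_support /\
  (exists z : X, (forall x, xle z x) /\ (forall x, p x = \bot -> x = z)) /\
  (forall x y, compatible x y -> exists j, is_lub x y j).
End BooleanSets.

Definition is_filter {T : Type} (le : T -> T -> Prop) (F : T -> Prop) : Prop :=
  (exists a, F a) /\
  (forall a b, F a -> F b -> exists c, F c /\ le c a /\ le c b) /\
  (forall a b, F a -> le a b -> F b).

Definition is_proper {T : Type} (F : T -> Prop) : Prop := exists a, ~ F a.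

Definition img {T U : Type} (f : T -> U) (G : T -> Prop) : U -> Prop :=
  fun u => exists x, G x /\ f x = u.

(* Main.v *)
Require Import Defs.
From HB Require Import structures.
From mathcomp Require Import all_boot all_order.
Import Order.TTheory.
Local Open Scope order_scope.

Theorem lemma3p3 (d : Order.disp_t) (B : cbDistrLatticeType d) (X : Type)
  (p : X -> B) (res : X -> B -> X) (HB : boolean_set p res)
  (G : X -> Prop) (HG : is_filter (xle p res) G) (HGp : is_proper G) :
  is_filter (fun a b : B => a <= b) (img p G) /\ is_proper (img p G).
Proof.
  case: HB => [[Hp1 [Hp2 Hp3]] [Hgs [[z0 [Hz0 Hz0b]] Hj]]].
  case: HG => [[a Ga] [Hdir Hup]].
  have xrefl : forall w, xle p res w w by move=> w; split => //; rewrite Hp2.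
  split; last first.
    exists \bot => -[x [Gx px]].
    case: HGp => y Hy; apply: Hy; apply: (Hup x) => //.
    by rewrite (Hz0b x px).
  split; first by exists (p a), a.
  split.
    move=> _ _ [x [Gx <-]] [y [Gy <-]].
    have [c [Gc [[Hc1 _] [Hc2 _]]]] := Hdir x y Gx Gy.
    by exists (p c); split => //; exists c.
  move=> _ b [x [Gx <-]] Hxb.
  have [z pz] := Hgs (b `\` p x).
  have Hcomp : compatible p res x z.
    have Hmeet : p x `&` p z = \bot by rewrite pz Order.CBDistrLatticeTheory.diffKI.
    exists z0; split; last first.
      rewrite Hmeet; apply/eqP; rewrite eq_le le0x andbT -Hmeet lexI.
      by have [h1 _] := Hz0 x; have [h2 _] := Hz0 z; rewrite h1 h2.
    split; first exact: Hz0.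
    split; first exact: Hz0.
    move=> w [Hw1 _] [Hw2 _].
    have pw : p w = \bot.
      by apply/eqP; rewrite eq_le le0x andbT -Hmeet lexI Hw1 Hw2.
    by rewrite (Hz0b w pw).
  have [j [[Hxj1 Hxj2] [[Hzj1 _] _]]] := Hj x z Hcomp.
  have Hbj : b <= p j.
    by rewrite -(Order.CBDistrLatticeTheory.leBUK Hxb) leUx -pz Hzj1 Hxj1.
  exists (res j b); split; last by rewrite Hp1.
  apply: (Hup x) => //; split; first by rewrite Hp1.
  by rewrite Hp3 // -Hxj2.
Qed.
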